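(* For any two continuous functions $P,Q\colon[0,1]\to\mathbb{R}$, the Fréchet distance equals the interleaving distance of their sublevel-set functors: $d_{\mathrm F}(P,Q)=d_I(\overleftarrow{P},\overleftarrow{Q})$.
   Context: Fréchet distance: $d_{\mathrm F}(P,Q)=\inf_\mu\max_{t\in[0,1]}|P(t)-Q(\mu(t))|$, infimum over continuous increasing bijections $\mu\colon[0,1]\to[0,1]$. $\mathbb{R}_\le$ is the poset category of real numbers (a unique morphism $y\to y'$ iff $y\le y'$). $\mathcal U$ is the category whose objects are closed subsets of $[0,1]$ (including $\emptyset$) and whose morphisms are continuous increasing functions between them. For a continuous $P\colon[0,1]\to\mathbb{R}$, the functor $\overleftarrow{P}\colon\mathbb{R}_\le\to\mathcal U$ sends $y$ to $P^{-1}((-\infty,y])$ and $y\le y'$ to the inclusion map. For a functor $F\colon\mathbb{R}_\le\to\mathcal C$ and $\delta\ge0$, the shift $F[\delta]$ is given by $F[\delta](y)=F(y+\delta)$, $F[\delta](y\le y')=F(y+\delta\le y'+\delta)$; $\eta^{F,\delta}\colon F\Rightarrow F[\delta]$ is the natural transformation with components $F(y\le y+\delta)$; for a natural transformation $\varphi\colon F\Rightarrow G$, $\varphi[\delta]\colon F[\delta]\Rightarrow G[\delta]$ has components $\varphi_{y+\delta}$. A $\delta$-interleaving between $F,G$ is a pair of natural transformations $\varphi\colon F\Rightarrow G[\delta]$, $\psi\colon G\Rightarrow F[\delta]$ with $\psi[\delta]\circ\varphi=\eta^{F,2\delta}$ and $\varphi[\delta]\circ\psi=\eta^{G,2\delta}$.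 The interleaving distance $d_I(F,G)$ is the infimum of all $\delta\ge0$ for which a $\delta$-interleaving exists. *)

(* Defs.v *)
From HB Require Import structures.
From mathcomp Require Import all_boot all_order all_algebra.
From mathcomp Require Import all_classical all_reals all_analysis.
Set Implicit Arguments. Unset Strict Implicit. Unset Printing Implicit Defensive.
Import Order.TTheory GRing.Theory Num.Theory.
Import numFieldNormedType.Exports.
Local Open Scope classical_set_scope.
Local Open Scope ring_scope.

Section Defs.
Variable R : realType.

Definition unitI : set R := [set t | 0 <= t <= 1].

(* Reparametrizations: continuous increasing bijections [0,1] -> [0,1]
   (functions R -> R, only their restriction to [0,1] matters). *)
Definition reparam (mu : R -> R) : Prop :=
  [/\ {within unitI, continuous mu},
      {in unitI &, forall s t, s < t -> mu s < mu t} &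
      set_bij unitI unitI mu].

Definition frechet_dist (P Q : R -> R) : \bar R :=
  ereal_inf [set ereal_sup [set (`|P t - Q (mu t)|)%:E | t in unitI]
            | mu in reparam].

Definition sublevel (P : R -> R) (y : R) : set R :=
  [set t | unitI t /\ P t <= y].

(* Morphisms of the category U from A to B: continuous (weakly) increasing
   maps A -> B, represented by functions R -> R restricted to A. *)
Definition U_hom (A B : set R) (f : R -> R) : Prop :=
  [/\ set_fun A B f,
      {within A, continuous f} &
      {in A &, forall s t, s <= t -> f s <= f t}].

(* Natural transformation sublevel P => (sublevel Q)[delta]: components
   phi y : sublevel P y -> sublevel Q (y + delta) in U, natural w.r.t. the
   inclusion maps (naturality square: phi y' o incl = incl o phi y). *)
Definition nat_trans_shift (P Q : R -> R) (delta : R) (phi : R -> R -> R) : Prop :=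
  (forall y, U_hom (sublevel P y) (sublevel Q (y + delta)) (phi y)) /\
  (forall y y', y <= y' -> forall x, sublevel P y x -> phi y' x = phi y x).

(* delta-interleaving between the sublevel-set functors of P and Q:
   psi[delta] o phi = eta^{2 delta} and phi[delta] o psi = eta^{2 delta}
   (the components of eta are the inclusion maps). *)
Definition interleaving (P Q : R -> R) (delta : R) : Prop :=
  exists phi psi : R -> R -> R,
    [/\ nat_trans_shift P Q delta phi,
        nat_trans_shift Q P delta psi,
        (forall y x, sublevel P y x -> psi (y + delta) (phi y x) = x) &
        (forall y x, sublevel Q y x -> phi (y + delta) (psi y x) = x)].

Definition interleaving_dist (P Q : R -> R) : \bar R :=
  ereal_inf [set delta%:E | delta in [set d : R | 0 <= d /\ interleaving P Q d]].

End Defs.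

(* Main.v *)
Require Import Defs.
From mathcomp Require Import all_boot all_order all_algebra.
From mathcomp Require Import all_classical all_reals all_analysis.
From mathcomp Require Import lra.
Import numFieldNormedType.Exports.
Import Order.TTheory GRing.Theory Num.Theory.
Local Open Scope classical_set_scope.
Local Open Scope ring_scope.

Section Aux.
Variable R : realType.
Local Notation unitI := (@Defs.unitI R).

Lemma unitIE : unitI = `[0, 1]%classic.
Proof. by apply/seteqP; split => x /=; rewrite /Defs.unitI /= in_itv. Qed.

Lemma inv_cont (mu g : R -> R) : reparam mu ->
  (forall z, unitI z -> unitI (g z) /\ mu (g z) = z) ->
  {within unitI, continuous g}.
Proof.
move=> [cmu smu [fmu imu surjmu]] hg.
have mle : {in unitI &, forall s t, s <= t -> mu s <= mu t}.
  move=> s t us ut; rewrite le_eqVlt => /orP[/eqP->//|st].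
  exact/ltW/smu.
rewrite unitIE; apply: segment_inc_surj_continuous.
- have toU x : x \in `[0, 1] -> unitI x by rewrite in_itv.
  move=> x y /toU ux /toU uy.
  have [ugx mgx] := hg x ux; have [ugy mgy] := hg y uy.
  apply/idP/idP => h.
  + by rewrite -mgx -mgy; apply: mle => //; rewrite inE.
  + rewrite leNgt; apply/negP => lt.
    have := smu (g y) (g x); rewrite !inE => /(_ ugy ugx lt).
    by rewrite mgx mgy => /(le_lt_trans h); rewrite ltxx.
- have u0 : unitI (0 : R) by rewrite /Defs.unitI /= lexx ler01.
  have u1 : unitI (1 : R) by rewrite /Defs.unitI /= lexx ler01.
  have [/andP[g00 g01] _] := hg 0 u0; have [/andP[g10 g11] _] := hg 1 u1.
  move=> w /=; rewrite in_itv /= => /andP[w0 w1].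
  have uw : unitI w by rewrite /Defs.unitI /=; apply/andP; split; lra.
  exists (mu w).
    by rewrite /= in_itv /=; have := fmu w uw; rewrite /Defs.unitI /=.
  have umw := fmu w uw; have [ug mg] := hg (mu w) umw.
  by apply: imu => //; rewrite inE.
Qed.

Lemma dir1 (P Q mu : R -> R) : reparam mu ->
  (interleaving_dist P Q <= ereal_sup [set (`|P t - Q (mu t)|)%:E | t in unitI])%E.
Proof.
move=> rmu; have [cmu smu [fmu imu surjmu]] := rmu.
set s := ereal_sup _.
have hub : forall t, unitI t -> ((`|P t - Q (mu t)|)%:E <= s)%E.
  by move=> t ut; apply: ereal_sup_ubound; exists t.
have u0 : unitI (0 : R) by rewrite /Defs.unitI /= lexx ler01.
have s0 : (0%:E <= s)%E by apply: le_trans (hub 0 u0); rewrite lee_fin.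
move: hub s0; case: s => [r| |] hub s0; last by [].
  2: by rewrite leey.
have r0 : 0 <= r by rewrite -lee_fin.
have hb t : unitI t -> `|P t - Q (mu t)| <= r by move=> ut; rewrite -lee_fin hub.
pose g z := xget 0 [set t | unitI t /\ mu t = z].
have hg z : unitI z -> unitI (g z) /\ mu (g z) = z.
  move=> uz; apply: (@xgetPex _ 0 [set t | unitI t /\ mu t = z]).
  by have [t ut mt] := surjmu z uz; exists t.
have hgm t : unitI t -> g (mu t) = t.
  move=> ut; have [ug mg] := hg (mu t) (fmu t ut).
  by apply: imu => //; rewrite inE.
have cg := inv_cont _ _ rmu hg.
apply: ereal_inf_lbound; exists r => //; split => //.
exists (fun _ => mu), (fun _ => g); split.
- split => //= y; split.
  + move=> x [ux Px]; split; first exact: fmu.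
    by have := hb x ux; rewrite ler_norml => /andP[h1 h2]; lra.
  + by apply: continuous_subspaceW cmu => x [].
  + move=> a b /set_mem[ua _] /set_mem[ub _].
    rewrite le_eqVlt => /orP[/eqP->//|ab].
    by apply/ltW/smu => //; rewrite inE.
- split => //= y; split.
  + move=> x [ux Qx]; have [ug mg] := hg x ux; split => //.
    by have := hb (g x) ug; rewrite mg ler_norml => /andP[h1 h2]; lra.
  + by apply: continuous_subspaceW cg => x [].
  + move=> a b /set_mem[ua _] /set_mem[ub _] ab.
    have [uga mga] := hg a ua; have [ugb mgb] := hg b ub.
    rewrite leNgt; apply/negP => lt.
    have := smu (g b) (g a); rewrite !inE => /(_ ugb uga lt).
    by rewrite mga mgb => /(le_lt_trans ab); rewrite ltxx.
- by move=> y x [ux _] /=; rewrite hgm.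
- by move=> y x [ux _] /=; have [] := hg x ux.
Qed.

Lemma bound_above (P : R -> R) : {within unitI, continuous P} ->
  exists M, forall t, unitI t -> P t <= M.
Proof.
rewrite unitIE => cP; have [c _ hc] := EVT_max ler01 cP.
by exists (P c) => t ut; apply: hc; rewrite in_itv.
Qed.

Lemma dir2 (P Q : R -> R) (d : R) :
  {within unitI, continuous P} -> {within unitI, continuous Q} ->
  0 <= d -> interleaving P Q d -> (frechet_dist P Q <= d%:E)%E.
Proof.
move=> cP cQ d0 [phi [psi [[Uphi natphi] [Upsi natpsi] c1 c2]]].
have [MP hMP] := bound_above _ cP; have [MQ hMQ] := bound_above _ cQ.
pose Y := Num.max MP MQ.
have hP t : unitI t -> P t <= Y.
  by move=> ut; rewrite le_max hMP.
have hQ t : unitI t -> Q t <= Y.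
  by move=> ut; rewrite le_max hMQ ?orbT.
have eP : sublevel P Y = unitI.
  by apply/seteqP; split => x; [case | move=> ux; split => //; exact: hP].
have eQ : sublevel Q Y = unitI.
  by apply/seteqP; split => x; [case | move=> ux; split => //; exact: hQ].
pose f := phi Y; pose g := psi Y.
have [funf cf mf] := Uphi Y; have [fung cg mg] := Upsi Y.
rewrite eP in cf mf; rewrite eQ in cg mg.
have fU t : unitI t -> unitI (f t).
  by move=> ut; have [] := funf t (conj ut (hP t ut)).
have gU t : unitI t -> unitI (g t).
  by move=> ut; have [] := fung t (conj ut (hQ t ut)).
have YY : Y <= Y + d by lra.
have gf t : unitI t -> g (f t) = t.
  move=> ut; have := c1 Y t (conj ut (hP t ut)).
  by rewrite (natpsi Y (Y + d) YY (f t) (conj (fU t ut) (hQ _ (fU t ut)))).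
have fg t : unitI t -> f (g t) = t.
  move=> ut; have := c2 Y t (conj ut (hQ t ut)).
  by rewrite (natphi Y (Y + d) YY (g t) (conj (gU t ut) (hP _ (gU t ut)))).
have rf : reparam f.
  split => //.
  - move=> a b ua ub ab.
    have := mf a b ua ub (ltW ab); rewrite le_eqVlt => /orP[/eqP fab|//].
    have := congr1 g fab.
    rewrite !gf; try exact: set_mem.
    by move=> eab; rewrite eab ltxx in ab.
  - split => //.
    + move=> a b ua ub fab.
      have := congr1 g fab.
      by rewrite !gf; try exact: set_mem.
    + by move=> z uz; exists (g z); [exact: gU | exact: fg].
apply: le_trans (_ : (ereal_sup [set (`|P t - Q (f t)|)%:E | t in unitI] <= _)%E).
  by apply: ereal_inf_lbound; exists f.
apply: ge_ereal_sup => _ [t ut <-]; rewrite lee_fin ler_norml.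
have h1 : Q (f t) <= P t + d.
  have st : sublevel P (P t) t by split.
  rewrite /f (natphi (P t) Y (hP t ut) t st).
  by have [fu _ _] := Uphi (P t); have [] := fu t st.
have h2 : P t <= Q (f t) + d.
  have uz := fU t ut; have sz : sublevel Q (Q (f t)) (f t) by split.
  rewrite -{1}(gf t ut) /g (natpsi (Q (f t)) Y (hQ _ uz) (f t) sz).
  by have [fu _ _] := Upsi (Q (f t)); have [] := fu (f t) sz.
apply/andP; split; lra.
Qed.

End Aux.

Theorem theorem36 (R : realType) (P Q : R -> R) :
  {within @unitI R, continuous P} -> {within @unitI R, continuous Q} ->
  frechet_dist P Q = interleaving_dist P Q.
Proof.
move=> cP cQ; apply/le_anti/andP; split.
- by apply: le_ereal_inf_tmp => _ [d [d0 hd] <-]; exact: dir2.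
- by apply: le_ereal_inf_tmp => _ [mu hmu <-]; exact: dir1.
Qed.
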